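(* Let $G=(V,E)$ be a finite simple graph and $v\in V$. Let $G-v$ denote the graph obtained from $G$ by deleting $v$ and all edges incident to $v$. Then $$\gamma_{coe}(G)-\deg(v)-1\leq \gamma_{coe}(G-v)\leq \gamma_{coe}(G)+\deg(v)-1.$$
   Context: All graphs are finite and simple. For a graph $G=(V,E)$ and $v\in V$, $N_G(v)=\{u\in V: uv\in E\}$ and $\deg(v)=|N_G(v)|$. A set $D\subseteq V$ is a dominating set if every vertex of $V\setminus D$ is adjacent to at least one vertex of $D$. A dominating set $D$ is a co-even dominating set if $\deg(v)$ is even for every $v\in V\setminus D$ (degrees taken in the graph under consideration). The co-even domination number $\gamma_{coe}(G)$ is the minimum cardinality of a co-even dominating set of $G$. *)

(* Defs.v *)
From mathcomp Require Import all_boot all_order all_algebra.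
Set Implicit Arguments. Unset Strict Implicit. Unset Printing Implicit Defensive.

(* A finite simple graph: vertex type T : finType, symmetric irreflexive edge
   relation e. We work with induced subgraphs G[S] on a vertex set S, so that
   G = G[setT] and G - v = G[setT :\ v]. *)

Definition simple_graph (T : finType) (e : rel T) : Prop :=
  symmetric e /\ irreflexive e.

Definition nbhd (T : finType) (e : rel T) (S : {set T}) (x : T) : {set T} :=
  [set y in S | e x y].
Definition deg (T : finType) (e : rel T) (S : {set T}) (x : T) : nat :=
  #|nbhd e S x|.

Definition co_even_dominating (T : finType) (e : rel T) (S D : {set T}) : bool :=
  (D \subset S) &&
  [forall x in S :\: D, [exists y in D, e x y] && ~~ odd (deg e S x)].

(* minimum cardinality of a co-even dominating set of G[S]
   (S itself is always one, so #|S| is a valid initial bound) *)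
Definition gamma_coe (T : finType) (e : rel T) (S : {set T}) : nat :=
  \big[minn/#|S|]_(D : {set T} | co_even_dominating e S D) #|D|.

(* Main.v *)
Require Import Defs.
From mathcomp Require Import all_boot all_order all_algebra.
From mathcomp Require Import zify.
Import GRing.Theory Num.Theory.

Lemma gamma_le (T : finType) (e : rel T) (S D : {set T}) :
  co_even_dominating e S D -> gamma_coe e S <= #|D|.
Proof.
move=> HD; rewrite /gamma_coe.
have : D \in index_enum {set T} by rewrite mem_index_enum.
elim: (index_enum _) => [//|a r IH]; rewrite inE big_cons.
case/orP => [/eqP <-|/IH h]; first by rewrite HD geq_minl.
case: ifP => _ //; exact: leq_trans (geq_minr _ _) h.
Qed.

Lemma gamma_att (T : finType) (e : rel T) (S : {set T}) :
  exists D, co_even_dominating e S D /\ gamma_coe e S = #|D|.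
Proof.
rewrite /gamma_coe.
apply: (big_ind (fun x => exists D, co_even_dominating e S D /\ x = #|D|)).
- exists S; split => //; apply/andP; split => //.
  by apply/forallP => x; rewrite setDv in_set0.
- move=> x y [D1 [H1 ->]] [D2 [H2 ->]].
  case: (leqP #|D1| #|D2|) => h.
  + by exists D1; split => //; apply/eqP; rewrite eq_sym; apply/eqP/minn_idPl.
  + by exists D2; split => //; apply/esym/minn_idPr/ltnW.
- by move=> D HD; exists D.
Qed.

Lemma deg_same (T : finType) (e : rel T) (v x : T) :
  symmetric e -> ~~ e v x ->
  deg e ([set: T] :\ v) x = deg e [set: T] x.
Proof.
move=> sym nvx; rewrite /deg; apply: eq_card => y.
rewrite /nbhd !inE; case: (eqVneq y v) => //= ->.
by rewrite sym (negbTE nvx).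
Qed.

Local Open Scope ring_scope.

Theorem mainTheorem2 (T : finType) (e : rel T) (v : T) :
  simple_graph e ->
  ((gamma_coe e [set: T])%:Z - (deg e [set: T] v)%:Z - 1
     <= (gamma_coe e ([set: T] :\ v))%:Z) /\
  ((gamma_coe e ([set: T] :\ v))%:Z
     <= (gamma_coe e [set: T])%:Z + (deg e [set: T] v)%:Z - 1).
Proof.
move=> [sym irr].
set N := nbhd e [set: T] v.
have inN : forall x, (x \in N) = e v x by move=> x; rewrite !inE.
have vN : v \notin N by rewrite inN irr.
have hdeg : deg e [set: T] v = #|N| by [].
rewrite hdeg; clearbody N.
have L1 : (gamma_coe e [set: T] <= gamma_coe e ([set: T] :\ v) + #|N| + 1)%N.
  have [D' [HD' ->]] := gamma_att _ e ([set: T] :\ v).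
  apply: (@leq_trans #|v |: (D' :|: N)|).
    apply: gamma_le; apply/andP; split; first exact: subsetT.
    apply/forallP => x; apply/implyP; rewrite !inE !negb_or => /andP [/andP [xv /andP [xD' xN]] _].
    move/andP: HD' => [_ /forallP /(_ x)]; rewrite !inE xv xD' /= => /andP [/existsP [y /andP [yD exy]] ev].
    apply/andP; split.
      by apply/existsP; exists y; rewrite !inE yD exy orbT.
    by rewrite -(deg_same _ _ v x sym) // -inN.
  rewrite cardsU1; have := leq_card_setU D' N; case=> h _; case: (v \notin _) => /=; lia.
have L2 : (gamma_coe e ([set: T] :\ v) + 1 <= gamma_coe e [set: T] + #|N|)%N.
  have [D [HD ->]] := gamma_att _ e [set: T].
  have dom : co_even_dominating e ([set: T] :\ v) ((D :|: N) :\ v).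
    apply/andP; split; first by apply: setSD; exact: subsetT.
    apply/forallP => x; apply/implyP; rewrite !inE negb_and negb_or => /andP [/orP [xv|/andP [xD xN]] /andP [xv' _]].
      by rewrite xv' in xv.
    move/andP: HD => [_ /forallP /(_ x)]; rewrite !inE xD /= => /andP [/existsP [y /andP [yD exy]] ev].
    apply/andP; split.
      apply/existsP; exists y; rewrite !inE yD exy /= ?andbT.
      by apply/negP => /eqP yv; move: xN; rewrite inN -yv sym exy.
    by rewrite (deg_same _ _ v x sym) // -inN.
  have G := gamma_le _ _ _ _ dom.
  case vD : (v \in D).
    have := cardsD1 v (D :|: N); rewrite inE vD /= => h1.
    have := leq_card_setU D N; case=> h2 _; lia.
  have E : (D :|: N) :\ v = D :|: N.
    by apply/setP => x; rewrite !inE; case: (eqVneq x v) => // ->; rewrite vD (negbTE vN).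
  rewrite E in G.
  move/andP: HD => [_ /forallP /(_ v)]; rewrite !inE vD /= => /andP [/existsP [y /andP [yD evy]] _].
  have : (0 < #|D :&: N|)%N by apply/card_gt0P; exists y; rewrite !inE yD inN evy.
  have := cardsUI D N; lia.
split; lia.
Qed.
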